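(* Let $\hat A\neq0$ be a Hermitian operator on $L^2(\mathbb R)$ with bounded Fock support. The following are equivalent: (i) $\hat A$ is an eigenvector of $\mathcal V_t$ (i.e. $\mathcal V_t[\hat A]=\lambda\hat A$ for some $\lambda$) for some $t>1$; (ii) $\hat A$ is an eigenvector of $\mathcal V_t$ for all $t\ge1$; (iii) the Wigner function of $\hat A$ has the form $W_{\hat A}(\alpha)=H(\alpha,\alpha^* )e^{-2|\alpha|^2}$ where $H(\alpha,\alpha^* )=\sum_{a+b=m}p_{ab}\alpha^a\alpha^{*b}$ is a real-valued homogeneous polynomial of total degree $m$ in $\alpha,\alpha^*$. Moreover, the corresponding eigenvalue is $\sqrt t^{\,m}$.
   Context: Let $\hat a$ be the annihilation operator on $L^2(\mathbb R)$, $\hat n=\hat a^\dagger\hat a$, $\{|k\rangle\}$ the Fock basis, $\hat D(\alpha)=\exp(\alpha\hat a^\dagger-\alpha^*\hat a)$, and $W_{\hat A}(\alpha)=\frac2\pi\mathrm{Tr}[\hat A\hat D(\alpha)(-1)^{\hat n}\hat D(\alpha)^\dagger]$ the Wigner function. $\hat A$ has bounded Fock support if $\hat P_N\hat A\hat P_N=\hat A$ for some $N$, where $\hat P_N=\sum_{k=0}^N|k\rangle\langle k|$. For $t>0$, the Vertigo map on such operators is $\mathcal V_t[\hat A]=\sum_{k\ge0}\frac{(t-1)^k}{k!}t^{\hat n/2}\hat a^k\hat A\hat a^{\dagger k}t^{\hat n/2}$ (finite sum), equivalently characterized by $W_{\mathcal V_t[\hat A]}(\alpha)=W_{\hat A}(\sqrt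 t\alpha)e^{2(t-1)|\alpha|^2}$. *)

(* Defs.v *)
From Stdlib Require Import Reals Factorial.
From Coquelicot Require Import Coquelicot.
Open Scope R_scope.

(* Operators with Fock support in {0..N} are represented by their Fock-basis
   matrix elements A i j = <i|A|j>, a function nat -> nat -> C vanishing
   outside [0,N]x[0,N]. *)
Definition Op := nat -> nat -> Complex.C.

Definition bounded_support (N : nat) (A : Op) : Prop :=
  forall i j, (N < i)%nat \/ (N < j)%nat -> A i j = RtoC 0.

Definition hermitian (A : Op) : Prop :=
  forall i j, A j i = Cconj (A i j).

Fixpoint Cpow (z : Complex.C) (n : nat) : Complex.C :=
  match n with O => RtoC 1 | S n => Cmult z (Cpow z n) end.

Fixpoint Csum (f : nat -> Complex.C) (n : nat) : Complex.C :=
  match n with O => f O | S n => Cplus (Csum f n) (f (S n)) end.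

Definition factR (n : nat) : R := INR (Factorial.fact n).

(* Vertigo map, N a bound on the Fock support of A:
   <i|V_t[A]|j> = sum_k (t-1)^k/k! * t^(i/2) t^(j/2)
                  * sqrt((i+k)!/i!) sqrt((j+k)!/j!) <i+k|A|j+k>,
   i.e. the matrix elements of
   sum_k (t-1)^k/k! t^(n/2) a^k A a^dag^k t^(n/2); terms with k > N vanish. *)
Definition Vertigo (N : nat) (t : R) (A : Op) : Op :=
  fun i j => Csum (fun k =>
     Cmult (RtoC ((t - 1) ^ k / factR k * sqrt t ^ i * sqrt t ^ j
                  * sqrt (factR (i + k) / factR i)
                  * sqrt (factR (j + k) / factR j)))
           (A (i + k)%nat (j + k)%nat)) N.

(* Fock matrix elements of the displacement operator
   D(alpha) = e^{-|alpha|^2/2} e^{alpha a^dag} e^{-alpha^* a}: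
   <m|D(alpha)|n> = e^{-|alpha|^2/2} sum_{l <= min m n}
      alpha^(m-l) (-alpha^* )^(n-l) sqrt(m! n!) / (l! (m-l)! (n-l)!). *)
Definition Dmat (alpha : Complex.C) (m n : nat) : Complex.C :=
  Cmult (RtoC (exp (- (Cmod alpha ^ 2) / 2)))
    (Csum (fun l =>
       Cmult (Cmult (Cpow alpha (m - l)) (Cpow (Copp (Cconj alpha)) (n - l)))
             (RtoC (sqrt (factR m * factR n)
                    / (factR l * factR (m - l) * factR (n - l)))))
     (Nat.min m n)).

(* k-th term of Tr[A D(alpha) (-1)^n D(alpha)^dag] in the Fock basis:
   sum_{i,j <= N} <i|A|j> <j|D|k> (-1)^k <k|D^dag|i>. *)
Definition wigner_term (N : nat) (A : Op) (alpha : Complex.C) (k : nat)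
  : Complex.C :=
  Csum (fun i => Csum (fun j =>
     Cmult (Cmult (A i j) (Dmat alpha j k))
           (Cmult (RtoC ((-1) ^ k)) (Cconj (Dmat alpha i k)))) N) N.

(* Wigner function W_A(alpha) = 2/pi Tr[A D(alpha)(-1)^n D(alpha)^dag],
   the trace being the (convergent) series over the Fock basis. *)
Definition Wigner (N : nat) (A : Op) (alpha : Complex.C) : Complex.C :=
  Cmult (RtoC (2 / PI))
    (Series (fun k => fst (wigner_term N A alpha k)),
     Series (fun k => snd (wigner_term N A alpha k))).

Definition is_eigenvector (N : nat) (t : R) (A : Op) : Prop :=
  exists lam : Complex.C, forall i j, Vertigo N t A i j = Cmult lam (A i j).

Definition homog_poly (m : nat) (p : nat -> Complex.C) (alpha : Complex.C)
  : Complex.C :=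
  Csum (fun a => Cmult (p a) (Cmult (Cpow alpha a) (Cpow (Cconj alpha) (m - a)))) m.

Definition wigner_form (N : nat) (A : Op) (m : nat) (p : nat -> Complex.C)
  : Prop :=
  (forall alpha, snd (homog_poly m p alpha) = 0) /\
  (forall alpha, Wigner N A alpha =
     Cmult (homog_poly m p alpha) (RtoC (exp (-2 * Cmod alpha ^ 2)))).

(* Main.v *)
Require Import Defs.
From Stdlib Require Import Reals Lia Lra Factorial Classical.
From Coquelicot Require Import Coquelicot.
Open Scope R_scope.

Lemma Cpow_eq : forall z n, Defs.Cpow z n = Coquelicot.Complex.Cpow z n.
Proof. intros z n; induction n; simpl; [reflexivity| rewrite IHn; reflexivity]. Qed.

Lemma Csum_ext : forall f g n, (forall k, (k <= n)%nat -> f k = g k) -> Csum f n = Csum g n.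
Proof.
  intros f g n; induction n; intros H; simpl.
  - apply H; lia.
  - rewrite IHn by (intros; apply H; lia). rewrite H by lia. reflexivity.
Qed.

Lemma Csum_plus : forall f g n, Csum (fun k => (f k + g k)%C) n = (Csum f n + Csum g n)%C.
Proof. intros f g n; induction n; simpl; [reflexivity| rewrite IHn; ring]. Qed.

Lemma Csum_mult_l : forall c f n, (c * Csum f n)%C = Csum (fun k => (c * f k)%C) n.
Proof. intros c f n; induction n; simpl; [reflexivity| rewrite <- IHn; ring]. Qed.

Lemma Csum_mult_r : forall c f n, (Csum f n * c)%C = Csum (fun k => (f k * c)%C) n.
Proof. intros c f n; induction n; simpl; [reflexivity| rewrite <- IHn; ring]. Qed.

Lemma Csum_zero : forall f n, (forall k, (k <= n)%nat -> f k = RtoC 0) -> Csum f n = RtoC 0.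
Proof.
  intros f n; induction n; intros H; simpl.
  - apply H; lia.
  - rewrite IHn by (intros; apply H; lia). rewrite H by lia. ring.
Qed.

Lemma Csum_swap : forall f n m,
  Csum (fun i => Csum (fun j => f i j) m) n = Csum (fun j => Csum (fun i => f i j) n) m.
Proof.
  intros f n; induction n; intros m; simpl.
  - reflexivity.
  - rewrite IHn. rewrite <- Csum_plus. reflexivity.
Qed.

Lemma Csum_delta : forall f c n,
  Csum (fun k => if Nat.eqb k c then f k else RtoC 0) n =
  if Nat.leb c n then f c else RtoC 0.
Proof.
  intros f c n; induction n; cbn [Csum].
  - destruct c; simpl; reflexivity.
  - rewrite IHn. destruct (Nat.eqb (S n) c) eqn:E0.
    + apply Nat.eqb_eq in E0. subst. replace (Nat.leb (S n) n) with false by (symmetry; apply Nat.leb_gt; lia).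
      rewrite Nat.leb_refl. ring.
    + apply Nat.eqb_neq in E0.
      destruct (Nat.leb c n) eqn:E1; destruct (Nat.leb c (S n)) eqn:E2;
      try apply Nat.leb_le in E1; try apply Nat.leb_le in E2;
      try apply Nat.leb_gt in E1; try apply Nat.leb_gt in E2; try ring; lia.
Qed.

Lemma Csum_trunc : forall f m n, (m <= n)%nat ->
  Csum (fun k => if Nat.leb k m then f k else RtoC 0) n = Csum f m.
Proof.
  intros f m n H; induction H.
  - apply Csum_ext. intros k Hk. replace (Nat.leb k m) with true by (symmetry; apply Nat.leb_le; lia). reflexivity.
  - cbn [Csum]. rewrite IHle. replace (Nat.leb (S m0) m) with false by (symmetry; apply Nat.leb_gt; lia). ring.
Qed.

Lemma Csum_extend : forall f m n, (m <= n)%nat ->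
  (forall k, (m < k <= n)%nat -> f k = RtoC 0) -> Csum f n = Csum f m.
Proof.
  intros f m n H H0. rewrite <- (Csum_trunc f m n H). apply Csum_ext.
  intros k Hk. destruct (Nat.leb_spec k m); [reflexivity| apply H0; lia].
Qed.

Lemma Csum_RtoC : forall f n, Csum (fun k => RtoC (f k)) n = RtoC (sum_f_R0 f n).
Proof. intros f n; induction n; simpl; [reflexivity| rewrite IHn, RtoC_plus; reflexivity]. Qed.

Lemma Csum_conj : forall f n, Cconj (Csum f n) = Csum (fun k => Cconj (f k)) n.
Proof. intros f n; induction n; simpl; [reflexivity| rewrite Cplus_conj, IHn; reflexivity]. Qed.

Lemma Csum_shift : forall f n, Csum f (S n) = (f O + Csum (fun k => f (S k)) n)%C.
Proof. intros f n; induction n; simpl in *; [reflexivity| rewrite IHn; ring]. Qed.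

Lemma Csum_opp : forall f n, Csum (fun k => (- f k)%C) n = (- Csum f n)%C.
Proof. intros f n; induction n; simpl; [reflexivity| rewrite IHn; ring]. Qed.

Lemma factR_pos : forall n, 0 < factR n.
Proof. intros n; unfold factR; apply INR_fact_lt_0. Qed.

Lemma diag_regroup : forall N (h : nat -> nat -> Complex.C) (g : nat -> Complex.C),
  (forall n, (N < n)%nat -> g n = RtoC 0) ->
  Csum (fun l => Csum (fun k => (h l k * g (l+k)%nat)%C) N) N =
  Csum (fun n => (Csum (fun l => h l (n-l)%nat) n * g n)%C) N.
Proof.
  intros N h g Hg.
  transitivity (Csum (fun l => Csum (fun k => Csum (fun n =>
     if Nat.eqb n (l+k) then (h l k * g n)%C else RtoC 0) N) N) N).
  { apply Csum_ext; intros l Hl. apply Csum_ext; intros k Hk.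
    rewrite (Csum_delta (fun n => (h l k * g n)%C)).
    destruct (Nat.leb_spec (l+k) N); [reflexivity|]. rewrite Hg by lia. ring. }
  transitivity (Csum (fun l => Csum (fun n => Csum (fun k =>
     if Nat.eqb n (l+k) then (h l k * g n)%C else RtoC 0) N) N) N).
  { apply Csum_ext; intros l Hl. apply Csum_swap. }
  rewrite Csum_swap. apply Csum_ext; intros n Hn.
  rewrite Csum_mult_r.
  rewrite <- (Csum_trunc _ n N Hn).
  apply Csum_ext; intros l Hl.
  destruct (Nat.leb_spec l n).
  - transitivity (Csum (fun k => if Nat.eqb k (n-l) then (h l k * g n)%C else RtoC 0) N).
    + apply Csum_ext; intros k Hk.
      destruct (Nat.eqb_spec n (l+k)); destruct (Nat.eqb_spec k (n-l)); try reflexivity; lia.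
    + rewrite (Csum_delta (fun k => (h l k * g n)%C)).
      replace (Nat.leb (n-l) N) with true by (symmetry; apply Nat.leb_le; lia). reflexivity.
  - apply Csum_zero; intros k Hk. destruct (Nat.eqb_spec n (l+k)); [lia| reflexivity].
Qed.

Definition Qm (N : nat) (A : Op) (i j : nat) : Complex.C :=
  Csum (fun l => (RtoC ((-1)^l / factR l * sqrt (factR (i+l) * factR (j+l)))
                  * A (i+l)%nat (j+l)%nat)%C) N.

Lemma sqrt_fact_combine : forall a b k,
  sqrt (factR a * factR b) * sqrt (factR (a+k) / factR a) * sqrt (factR (b+k) / factR b)
  = sqrt (factR (a+k) * factR (b+k)).
Proof.
  intros a b k.
  pose proof (factR_pos a); pose proof (factR_pos b);
  pose proof (factR_pos (a+k)); pose proof (factR_pos (b+k)).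
  rewrite <- !sqrt_mult.
  all: try (f_equal; field; split; apply Rgt_not_eq; lra).
  all: unfold Rdiv; repeat apply Rmult_le_pos; try (apply Rlt_le, Rinv_0_lt_compat); lra.
Qed.

Lemma sqrt_pow_combine : forall t i j l, 0 <= t ->
  sqrt t ^ (i+l) * sqrt t ^ (j+l) = sqrt t ^ (i+j) * t ^ l.
Proof.
  intros t i j l Ht. rewrite !pow_add.
  replace (t ^ l) with (sqrt t ^ l * sqrt t ^ l).
  - ring.
  - rewrite <- Rpow_mult_distr, sqrt_sqrt; auto.
Qed.

Lemma binom_inner : forall t n,
  sum_f_R0 (fun l => (-1)^l / factR l * t ^ l * ((t-1)^(n-l) / factR (n-l))) n
  = (-1)^n / factR n.
Proof.
  intros t n.
  pose proof (binomial (-t) (t-1) n) as Hb.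
  replace (-t + (t-1)) with (-1) in Hb by ring.
  unfold Rdiv at 3. rewrite Hb, Rmult_comm, scal_sum.
  apply sum_eq. intros l Hl. unfold Binomial.C, factR.
  pose proof (INR_fact_lt_0 l); pose proof (INR_fact_lt_0 (n-l)); pose proof (INR_fact_lt_0 n).
  replace (-t) with (-1 * t) by ring. rewrite Rpow_mult_distr.
  field. repeat split; apply Rgt_not_eq; lra.
Qed.

Lemma Vq : forall N t A i j, bounded_support N A -> 0 <= t ->
  Qm N (Vertigo N t A) i j = (RtoC (sqrt t ^ (i+j)) * Qm N A i j)%C.
Proof.
  intros N t A i j hsupp Ht. unfold Qm, Vertigo.
  set (g := fun n => (RtoC (sqrt (factR (i+n) * factR (j+n))) * A (i+n)%nat (j+n)%nat)%C).
  set (h := fun l k => RtoC ((-1)^l / factR l * t^l * ((t-1)^k / factR k) * sqrt t ^ (i+j))).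
  transitivity (Csum (fun l => Csum (fun k => (h l k * g (l+k)%nat)%C) N) N).
  { apply Csum_ext; intros l Hl. rewrite Csum_mult_l. apply Csum_ext; intros k Hk.
    unfold g, h. rewrite !Nat.add_assoc.
    rewrite !Cmult_assoc, <- !RtoC_mult. f_equal. f_equal.
    rewrite <- (sqrt_fact_combine (i+l) (j+l) k).
    replace ((t - 1) ^ k / factR k * sqrt t ^ (i + l) * sqrt t ^ (j + l))
      with ((t - 1) ^ k / factR k * (sqrt t ^ (i + l) * sqrt t ^ (j + l))) by ring.
    rewrite (sqrt_pow_combine t i j l Ht). ring. }
  rewrite diag_regroup.
  2: { intros n Hn. unfold g. rewrite hsupp by lia. ring. }
  rewrite Csum_mult_l. apply Csum_ext; intros n Hn. unfold h.
  rewrite Csum_RtoC. rewrite <- scal_sum. rewrite binom_inner.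
  unfold g. rewrite !Cmult_assoc, <- !RtoC_mult. f_equal. f_equal. ring.
Qed.

Lemma Csum_only0 : forall f n, (forall k, (1 <= k <= n)%nat -> f k = RtoC 0) -> Csum f n = f O.
Proof.
  intros f n H. rewrite (Csum_extend f 0 n); [reflexivity|lia|]. intros; apply H; lia.
Qed.

Lemma Cmult_eq0_l : forall c z : Complex.C, c <> RtoC 0 -> (c * z)%C = RtoC 0 -> z = RtoC 0.
Proof.
  intros c z Hc H. replace z with (/ c * (c * z))%C by (field; exact Hc).
  rewrite H. ring.
Qed.

Lemma Qm_inj : forall N B, bounded_support N B -> (forall i j, Qm N B i j = RtoC 0) ->
  forall i j, B i j = RtoC 0.
Proof.
  intros N B hs hq.
  assert (P : forall n i j, (N < i + n)%nat -> B i j = RtoC 0).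
  { induction n; intros i j Hi.
    - apply hs; lia.
    - destruct (Nat.lt_ge_cases N (i+n)) as [H|H]; [apply IHn; lia|].
      pose proof (hq i j) as Hq. unfold Qm in Hq.
      rewrite Csum_only0 in Hq.
      2: { intros k Hk. rewrite (IHn (i+k)%nat (j+k)%nat) by lia. ring. }
      rewrite !Nat.add_0_r in Hq.
      refine (Cmult_eq0_l _ _ _ Hq).
      intro E. apply RtoC_inj in E. simpl in E.
      pose proof (factR_pos i); pose proof (factR_pos j).
      assert (0 < sqrt (factR i * factR j)) by (apply sqrt_lt_R0; apply Rmult_lt_0_compat; lra).
      replace (1 / factR 0) with 1 in E by (unfold factR; simpl; field).
      lra. }
  intros i j. apply (P (S N)). lia.
Qed.

Lemma Qm_lin : forall N f g c i j,
  Qm N (fun a b => (f a b + c * g a b)%C) i j = (Qm N f i j + c * Qm N g i j)%C.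
Proof.
  intros. unfold Qm. rewrite Csum_mult_l, <- Csum_plus. apply Csum_ext; intros; ring.
Qed.

Lemma Qm_ext : forall N f g i j, (forall a b, f a b = g a b) -> Qm N f i j = Qm N g i j.
Proof. intros. unfold Qm. apply Csum_ext; intros. rewrite H; reflexivity. Qed.

Lemma Vertigo_supp : forall N t A, bounded_support N A -> bounded_support N (Vertigo N t A).
Proof.
  intros N t A hs i j Hij. unfold Vertigo. apply Csum_zero. intros k Hk.
  rewrite hs by lia. ring.
Qed.

Definition Qsupp N A m := forall i j, (i + j <> m)%nat -> Qm N A i j = RtoC 0.

Lemma supp_to_eig : forall N A m t, bounded_support N A -> Qsupp N A m -> 0 <= t ->
  forall i j, Vertigo N t A i j = (RtoC (sqrt t ^ m) * A i j)%C.
Proof.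
  intros N A m t hs hq Ht.
  set (B := fun a b => (Vertigo N t A a b + (- RtoC (sqrt t ^ m)) * A a b)%C).
  assert (HB : forall i j, B i j = RtoC 0).
  { apply (Qm_inj N).
    - intros i j Hij. unfold B. rewrite (Vertigo_supp N t A hs i j Hij), hs by assumption. ring.
    - intros i j. unfold B. rewrite Qm_lin, Vq by assumption.
      destruct (Nat.eq_dec (i+j) m) as [E|E].
      + subst. ring.
      + rewrite hq by assumption. ring. }
  intros i j. specialize (HB i j). unfold B in HB.
  replace (Vertigo N t A i j) with ((Vertigo N t A i j + - RtoC (sqrt t ^ m) * A i j) + RtoC (sqrt t ^ m) * A i j)%C by ring.
  rewrite HB. ring.
Qed.

Lemma eig_to_supp : forall N A t, bounded_support N A -> (exists i j, A i j <> RtoC 0) ->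
  1 < t -> is_eigenvector N t A -> exists m, Qsupp N A m.
Proof.
  intros N A t hs [i0 [j0 Hnz]] Ht [lam Hlam].
  assert (Hex : exists a b, Qm N A a b <> RtoC 0).
  { apply NNPP. intro Hn. apply Hnz. apply (Qm_inj N A hs).
    intros a b. apply NNPP. intro Hab. apply Hn. exists a, b. exact Hab. }
  destruct Hex as [a [b Hab]].
  assert (Hst : 1 < sqrt t).
  { rewrite <- sqrt_1. apply sqrt_lt_1; lra. }
  assert (HQ : forall i j, (RtoC (sqrt t ^ (i+j)) * Qm N A i j)%C = (lam * Qm N A i j)%C).
  { intros i j. rewrite <- Vq by (auto; lra).
    rewrite (Qm_ext N _ (fun a b => (RtoC 0 + lam * A a b)%C)).
    - rewrite Qm_lin. unfold Qm at 1. rewrite Csum_zero by (intros; ring). ring.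
    - intros; rewrite Hlam; ring. }
  exists (a+b)%nat. intros i j Hij.
  apply NNPP. intro Hq.
  assert (E1 : RtoC (sqrt t ^ (i+j)) = lam).
  { replace (RtoC (sqrt t ^ (i+j))) with (RtoC (sqrt t ^ (i+j)) * Qm N A i j * / Qm N A i j)%C by (field; exact Hq).
    rewrite (HQ i j). field. exact Hq. }
  assert (E2 : RtoC (sqrt t ^ (a+b)) = lam).
  { replace (RtoC (sqrt t ^ (a+b))) with (RtoC (sqrt t ^ (a+b)) * Qm N A a b * / Qm N A a b)%C by (field; exact Hab).
    rewrite (HQ a b). field. exact Hab. }
  rewrite <- E2 in E1. apply RtoC_inj in E1.
  destruct (Nat.lt_total (i+j) (a+b)) as [L|[L|L]].
  - pose proof (Rlt_pow _ _ _ Hst L). lra.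
  - lia.
  - pose proof (Rlt_pow _ _ _ Hst L). lra.
Qed.

Definition bet (a : Complex.C) : Complex.C := Copp (Cconj a).

Definition Tm (a : Complex.C) (j k l : nat) : Complex.C :=
  if Nat.leb l k then
    (RtoC (/ (factR l * factR (j-l) * factR (k-l))) *
     (Coquelicot.Complex.Cpow a (j-l) * Coquelicot.Complex.Cpow (bet a) (k-l)))%C
  else RtoC 0.

Definition dd (a : Complex.C) (j k : nat) : Complex.C := Csum (Tm a j k) j.

Lemma factR_S : forall x, factR (S x) = INR (S x) * factR x.
Proof. intros x. unfold factR. change (fact (S x)) with (S x * fact x)%nat. rewrite mult_INR. reflexivity. Qed.

Lemma INR_S_pos : forall x, 0 < INR (S x).
Proof. intros; apply lt_0_INR; lia. Qed.

Lemma Dmat_dd : forall a j k,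
  Dmat a j k = (RtoC (exp (- (Cmod a ^ 2) / 2) * sqrt (factR j * factR k)) * dd a j k)%C.
Proof.
  intros a j k. unfold Dmat, dd.
  rewrite RtoC_mult, <- Cmult_assoc. f_equal.
  rewrite Csum_mult_l.
  assert (Hterm : forall l, (l <= Nat.min j k)%nat ->
    (Defs.Cpow a (j - l) * Defs.Cpow (- Cconj a) (k - l) *
     RtoC (sqrt (factR j * factR k) / (factR l * factR (j - l) * factR (k - l))))%C
    = (RtoC (sqrt (factR j * factR k)) * Tm a j k l)%C).
  { intros l Hl. unfold Tm. replace (Nat.leb l k) with true by (symmetry; apply Nat.leb_le; lia).
    rewrite (Cpow_eq a), (Cpow_eq (Copp (Cconj a))). unfold bet. unfold Rdiv. rewrite RtoC_mult. ring. }
  destruct (Nat.le_ge_cases j k) as [H|H].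
  - replace (Nat.min j k) with j by lia. apply Csum_ext. intros l Hl. apply Hterm. lia.
  - replace (Nat.min j k) with k by lia.
    rewrite (Csum_ext _ (fun l => (RtoC (sqrt (factR j * factR k)) * Tm a j k l)%C) k)
      by (intros; apply Hterm; lia).
    rewrite <- (Csum_trunc _ k j H). apply Csum_ext. intros l Hl.
    unfold Tm. destruct (Nat.leb l k); [reflexivity| ring].
Qed.

Lemma Csum_S : forall f n, Csum f (S n) = (Csum f n + f (S n))%C.
Proof. reflexivity. Qed.

Lemma Tm_A : forall a j k l, (l <= j)%nat ->
  (RtoC (INR (S j - l)) * Tm a (S j) k l)%C = (a * Tm a j k l)%C.
Proof.
  intros a j k l Hl. unfold Tm. destruct (Nat.leb l k); [|ring].
  replace (S j - l)%nat with (S (j - l)) by lia.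
  rewrite factR_S. rewrite Coquelicot.Complex.Cpow_S.
  set (x := (j - l)%nat).
  pose proof (factR_pos l); pose proof (factR_pos x); pose proof (factR_pos (k-l)); pose proof (INR_S_pos x).
  replace (/ (factR l * (INR (S x) * factR x) * factR (k - l))) with
    (/ INR (S x) * / (factR l * factR x * factR (k - l))) by (field; repeat split; apply Rgt_not_eq; lra).
  rewrite RtoC_mult.
  replace (RtoC (INR (S x))) with (RtoC (INR (S x))) by reflexivity.
  transitivity (RtoC (INR (S x) * / INR (S x)) * (a * (RtoC (/ (factR l * factR x * factR (k - l))) *
     (Coquelicot.Complex.Cpow a x * Coquelicot.Complex.Cpow (bet a) (k - l)))))%C.
  - rewrite RtoC_mult. ring.
  - rewrite Rinv_r by (apply Rgt_not_eq; lra). ring.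
Qed.

Lemma Tm_B : forall a j k l,
  (RtoC (INR (S l)) * Tm a (S j) (S k) (S l))%C = Tm a j k l.
Proof.
  intros a j k l. unfold Tm. simpl Nat.leb. destruct (Nat.leb l k); [|ring].
  simpl Nat.sub. rewrite factR_S.
  pose proof (factR_pos l); pose proof (factR_pos (j-l)); pose proof (factR_pos (k-l)); pose proof (INR_S_pos l).
  rewrite Cmult_assoc, <- RtoC_mult. f_equal. f_equal.
  field. repeat split; apply Rgt_not_eq; lra.
Qed.

Lemma dd_rec : forall a j k,
  (RtoC (INR (S j)) * dd a (S j) k)%C =
  ((match k with O => RtoC 0 | S k' => dd a j k' end) + a * dd a j k)%C.
Proof.
  intros a j k. unfold dd.
  rewrite Csum_mult_l.
  rewrite (Csum_ext _ (fun l => (RtoC (INR (S j - l)) * Tm a (S j) k l + RtoC (INR l) * Tm a (S j) k l)%C)).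
  2: { intros l Hl. rewrite <- Cmult_plus_distr_r, <- RtoC_plus. rewrite <- plus_INR.
       replace (S j - l + l)%nat with (S j) by lia. reflexivity. }
  rewrite Csum_plus.
  rewrite (Csum_S (fun l => (RtoC (INR (S j - l)) * Tm a (S j) k l)%C) j).
  replace (S j - S j)%nat with O by lia.
  rewrite (Csum_ext (fun l => (RtoC (INR (S j - l)) * Tm a (S j) k l)%C) (fun l => (a * Tm a j k l)%C))
    by (intros; apply Tm_A; lia).
  rewrite <- Csum_mult_l.
  rewrite (Csum_shift (fun l => (RtoC (INR l) * Tm a (S j) k l)%C) j).
  destruct k as [|k'].
  - assert (HB : Csum (fun l => (RtoC (INR (S l)) * Tm a (S j) 0 (S l))%C) j = RtoC 0)
      by (apply Csum_zero; intros; unfold Tm; simpl Nat.leb; apply Cmult_0_r).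
    cbv beta. rewrite HB. simpl INR. ring.
  - cbv beta. rewrite (Csum_ext (fun l => (RtoC (INR (S l)) * Tm a (S j) (S k') (S l))%C) (Tm a j k')) by (intros; apply Tm_B).
    simpl INR. ring.
Qed.

Lemma sqrt_S_fact : forall j k,
  sqrt (INR (S j)) * sqrt (factR (S j) * factR k) = INR (S j) * sqrt (factR j * factR k).
Proof.
  intros j k. pose proof (INR_S_pos j); pose proof (factR_pos j); pose proof (factR_pos k).
  rewrite factR_S, Rmult_assoc, sqrt_mult_alt by lra.
  rewrite <- Rmult_assoc, sqrt_sqrt by lra. reflexivity.
Qed.

Lemma Dmat_rec1 : forall a j k,
  (RtoC (sqrt (INR (S j))) * Dmat a (S j) k)%C =
  (RtoC (sqrt (INR k)) * Dmat a j (k-1) + a * Dmat a j k)%C.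
Proof.
  intros a j k. rewrite !Dmat_dd.
  set (E := exp (- (Cmod a ^ 2) / 2)).
  transitivity (RtoC (E * sqrt (factR j * factR k)) * (RtoC (INR (S j)) * dd a (S j) k))%C.
  { rewrite !Cmult_assoc, <- !RtoC_mult. f_equal. f_equal. transitivity (E * (sqrt (INR (S j)) * sqrt (factR (S j) * factR k))); [ring|]. rewrite sqrt_S_fact. ring. }
  rewrite dd_rec. destruct k as [|k'].
  - simpl INR. rewrite sqrt_0. ring.
  - replace (S k' - 1)%nat with k' by lia.
    assert (Hs : sqrt (INR (S k')) * sqrt (factR j * factR k') = sqrt (factR j * factR (S k'))).
    { pose proof (INR_S_pos k'); pose proof (factR_pos j); pose proof (factR_pos k').
      rewrite <- sqrt_mult_alt by lra. f_equal. rewrite factR_S. ring. }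
    rewrite <- Hs. rewrite !RtoC_mult. ring.
Qed.

Lemma Dmat_sym : forall a j k, Dmat a j k = Dmat (bet a) k j.
Proof.
  intros a j k. unfold Dmat, bet.
  rewrite Cmod_opp, Cmod_conj. f_equal.
  rewrite Nat.min_comm. apply Csum_ext. intros l Hl.
  rewrite Copp_conj, Cconj_conj. replace (- - a)%C with a by ring.
  rewrite (Rmult_comm (factR k) (factR j)). replace (factR l * factR (k - l) * factR (j - l)) with (factR l * factR (j - l) * factR (k - l)) by ring. ring.
Qed.

Lemma Dmat_rec2 : forall a i k,
  (RtoC (sqrt (INR (S k))) * Dmat a i (S k))%C =
  (RtoC (sqrt (INR i)) * Dmat a (i-1) k - Cconj a * Dmat a i k)%C.
Proof.
  intros a i k. rewrite !(Dmat_sym a). rewrite Dmat_rec1. unfold bet. ring.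
Qed.

Lemma sum_n_fst : forall (a : nat -> Complex.C) n,
  fst (sum_n (G := C_AbelianMonoid) a n) = sum_n (G := R_AbelianMonoid) (fun k => fst (a k)) n.
Proof.
  intros a n; induction n.
  - rewrite !sum_O. reflexivity.
  - rewrite !sum_Sn. rewrite <- IHn. reflexivity.
Qed.

Lemma sum_n_snd : forall (a : nat -> Complex.C) n,
  snd (sum_n (G := C_AbelianMonoid) a n) = sum_n (G := R_AbelianMonoid) (fun k => snd (a k)) n.
Proof.
  intros a n; induction n.
  - rewrite !sum_O. reflexivity.
  - rewrite !sum_Sn. rewrite <- IHn. reflexivity.
Qed.

Lemma is_series_C_fst : forall (a : nat -> Complex.C) (l : Complex.C),
  is_series (V := C_NormedModule) a l -> is_series (fun n => fst (a n)) (fst l).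
Proof.
  intros a l H. unfold is_series in *.
  apply filterlim_ext with (f := fun n => fst (sum_n (G := C_AbelianMonoid) a n)).
  { intros n. apply sum_n_fst. }
  intros P [eps HP]. apply (H (fun z => P (fst z))). exists eps. intros y Hy. apply HP. apply Hy.
Qed.

Lemma is_series_C_snd : forall (a : nat -> Complex.C) (l : Complex.C),
  is_series (V := C_NormedModule) a l -> is_series (fun n => snd (a n)) (snd l).
Proof.
  intros a l H. unfold is_series in *.
  apply filterlim_ext with (f := fun n => snd (sum_n (G := C_AbelianMonoid) a n)).
  { intros n. apply sum_n_snd. }
  intros P [eps HP]. apply (H (fun z => P (snd z))). exists eps. intros y Hy. apply HP. apply Hy.
Qed.

Lemma is_series_C_pair : forall (a : nat -> Complex.C) (l1 l2 : R),
  is_series (fun n => fst (a n)) l1 -> is_series (fun n => snd (a n)) l2 ->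
  is_series (V := C_NormedModule) a (l1, l2).
Proof.
  intros a l1 l2 H1 H2. unfold is_series in *.
  intros P [eps HP].
  assert (E1 := H1 (ball l1 eps) (locally_ball l1 eps)).
  assert (E2 := H2 (ball l2 eps) (locally_ball l2 eps)).
  unfold filtermap in E1, E2.
  unfold filtermap. generalize (filter_and _ _ E1 E2). apply filter_imp.
  intros n [B1 B2]. apply HP. split.
  - rewrite sum_n_fst. exact B1.
  - rewrite sum_n_snd. exact B2.
Qed.

Lemma is_series_R0 : is_series (fun _ : nat => 0) 0.
Proof.
  unfold is_series. apply filterlim_ext with (f := fun _ => 0).
  - intros n. induction n.
    + rewrite sum_O. reflexivity.
    + rewrite sum_Sn, <- IHn. simpl. unfold plus; simpl. ring.
  - apply filterlim_const.
Qed.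

Lemma is_series_RtoC : forall f l, is_series f l ->
  is_series (V := C_NormedModule) (fun n => RtoC (f n)) (RtoC l).
Proof.
  intros f l H. apply is_series_C_pair; simpl.
  - exact H.
  - exact is_series_R0.
Qed.

Lemma is_series_conj : forall (a : nat -> Complex.C) l, is_series (V := C_NormedModule) a l ->
  is_series (V := C_NormedModule) (fun n => Cconj (a n)) (Cconj l).
Proof.
  intros a l H. destruct l as [l1 l2]. apply is_series_C_pair; simpl.
  - apply (is_series_C_fst _ _ H).
  - apply (is_series_opp (V := R_NormedModule) _ _ (is_series_C_snd _ _ H)).
Qed.

Lemma is_series_Cplus : forall (a b : nat -> Complex.C) la lb,
  is_series (V := C_NormedModule) a la -> is_series (V := C_NormedModule) b lb ->
  is_series (V := C_NormedModule) (fun n => (a n + b n)%C) (la + lb)%C.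
Proof. intros. apply (is_series_plus a b la lb); assumption. Qed.

Lemma is_series_Cscal : forall (c : Complex.C) (a : nat -> Complex.C) l,
  is_series (V := C_NormedModule) a l ->
  is_series (V := C_NormedModule) (fun n => (c * a n)%C) (c * l)%C.
Proof. intros. apply (is_series_scal c a l); assumption. Qed.

Lemma is_series_Cext : forall (a b : nat -> Complex.C) (l l' : Complex.C),
  (forall n, a n = b n) -> l = l' ->
  is_series (V := C_NormedModule) a l -> is_series (V := C_NormedModule) b l'.
Proof. intros a b l l' H E. subst. apply is_series_ext. exact H. Qed.

Lemma is_series_Csum : forall (f : nat -> nat -> Complex.C) (l : nat -> Complex.C) m,
  (forall i, (i <= m)%nat -> is_series (V := C_NormedModule) (f i) (l i)) ->
  is_series (V := C_NormedModule) (fun k => Csum (fun i => f i k) m) (Csum l m).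
Proof.
  intros f l m; induction m; intros H.
  - simpl. apply H. lia.
  - simpl. apply is_series_Cplus; [apply IHm; intros; apply H; lia| apply H; lia].
Qed.

Lemma is_series_decr1C : forall (a : nat -> Complex.C) l, a O = RtoC 0 ->
  is_series (V := C_NormedModule) (fun k => a (S k)) l -> is_series (V := C_NormedModule) a l.
Proof.
  intros a l H0 H. apply is_series_decr_1.
  match goal with |- is_series _ ?x => replace x with l; [exact H|] end.
  rewrite H0. change (l = (l + - RtoC 0)%C). destruct l as [x y]. apply injective_projections; simpl; ring.
Qed.

Definition term (a : Complex.C) (j i k : nat) : Complex.C :=
  (Dmat a j k * (RtoC ((-1)^k) * Cconj (Dmat a i k)))%C.

Definition Xv (a : Complex.C) (j i : nat) : Complex.C :=
  (RtoC ((-1)^i) * Dmat (RtoC 2 * a) j i)%C.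

Lemma RtoC_pow : forall r n, RtoC (r ^ n) = Coquelicot.Complex.Cpow (RtoC r) n.
Proof. intros r n; induction n; simpl; [reflexivity| rewrite RtoC_mult, IHn; reflexivity]. Qed.

Lemma RtoC_m1 : RtoC (-1) = Copp (RtoC 1).
Proof. apply injective_projections; simpl; ring. Qed.

Lemma Xrec : forall a j i,
  (RtoC (sqrt (INR (S j))) * Xv a (S j) i)%C =
  (- RtoC (sqrt (INR i)) * Xv a j (i-1) + RtoC 2 * a * Xv a j i)%C.
Proof.
  intros a j i. unfold Xv.
  transitivity (RtoC ((-1)^i) * (RtoC (sqrt (INR (S j))) * Dmat (RtoC 2 * a) (S j) i))%C; [ring|].
  rewrite Dmat_rec1. destruct i as [|i'].
  - simpl INR. rewrite sqrt_0. ring.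
  - replace (S i' - 1)%nat with i' by lia. simpl pow. rewrite RtoC_mult, RtoC_m1. ring.
Qed.

Lemma factR_0 : factR 0 = 1.
Proof. unfold factR; simpl; ring. Qed.

Lemma Dmat_0k : forall a k,
  Dmat a 0 k = (RtoC (exp (- (Cmod a ^ 2) / 2) / sqrt (factR k)) * Coquelicot.Complex.Cpow (bet a) k)%C.
Proof.
  intros a k. rewrite Dmat_dd. unfold dd, Tm. simpl Csum. simpl Nat.leb.
  rewrite !Nat.sub_0_r. rewrite factR_0. simpl Coquelicot.Complex.Cpow.
  rewrite Cmult_assoc, <- RtoC_mult. rewrite Cmult_1_l. f_equal. f_equal.
  pose proof (factR_pos k).
  assert (Hs : sqrt (factR k) * sqrt (factR k) = factR k) by (apply sqrt_sqrt; lra).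
  assert (0 < sqrt (factR k)) by (apply sqrt_lt_R0; lra).
  rewrite Rmult_1_l. rewrite <- Hs at 2. field. apply Rgt_not_eq; lra.
Qed.

Lemma bet_bet : forall a, bet (bet a) = a.
Proof. intros a. unfold bet. rewrite Copp_conj, Cconj_conj. ring. Qed.

Lemma Cmod_bet : forall a, Cmod (bet a) = Cmod a.
Proof. intros a. unfold bet. rewrite Cmod_opp, Cmod_conj. reflexivity. Qed.

Lemma Dmat_k0 : forall a k,
  Dmat a k 0 = (RtoC (exp (- (Cmod a ^ 2) / 2) / sqrt (factR k)) * Coquelicot.Complex.Cpow a k)%C.
Proof.
  intros a k. rewrite Dmat_sym, Dmat_0k, bet_bet, Cmod_bet. reflexivity.
Qed.

Lemma Cmod_2a : forall a, Cmod (RtoC 2 * a) ^ 2 = 4 * Cmod a ^ 2.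
Proof.
  intros a. rewrite Cmod_mult, Cmod_R, Rabs_pos_eq by lra. ring.
Qed.

Lemma bet_conj_mod : forall a, (bet a * Cconj (bet a))%C = RtoC (Cmod a ^ 2).
Proof.
  intros a. rewrite <- (Cmod_bet a). rewrite Cmod2_conj. reflexivity.
Qed.

Lemma Cpow_mult_l' : forall (x y : Complex.C) n,
  (Coquelicot.Complex.Cpow x n * Coquelicot.Complex.Cpow y n)%C = Coquelicot.Complex.Cpow (x * y) n.
Proof. intros. rewrite Cpow_mult_l. reflexivity. Qed.

Lemma series_base : forall a, is_series (V := C_NormedModule) (term a 0 0) (Xv a 0 0).
Proof.
  intros a.
  set (x := Cmod a ^ 2). set (E := exp (- x / 2)).
  pose proof (proj1 (is_pseries_R _ _ _) (is_exp_Reals (- x))) as Hexp.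
  apply is_series_RtoC in Hexp.
  apply (is_series_Cscal (RtoC (E * E))) in Hexp.
  refine (is_series_Cext _ _ _ _ _ _ Hexp).
  - intros k. unfold term. rewrite !Dmat_0k. fold x E.
    rewrite Cmult_conj, Cpow_conj.
    transitivity (RtoC (E / sqrt (factR k)) * RtoC (E / sqrt (factR k)) * RtoC ((-1)^k) *
      (Coquelicot.Complex.Cpow (bet a) k * Coquelicot.Complex.Cpow (Cconj (bet a)) k))%C.
    2: { replace (Cconj (RtoC (E / sqrt (factR k)))) with (RtoC (E / sqrt (factR k))) by
           (apply injective_projections; simpl; ring). ring. }
    rewrite Cpow_mult_l', bet_conj_mod. fold x. rewrite <- RtoC_pow, <- !RtoC_mult.
    f_equal.
    pose proof (factR_pos k).
    assert (Hs : sqrt (factR k) * sqrt (factR k) = factR k) by (apply sqrt_sqrt; lra).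
    assert (0 < sqrt (factR k)) by (apply sqrt_lt_R0; lra).
    replace ((- x) ^ k) with ((-1)^k * x^k) by (rewrite <- Rpow_mult_distr; f_equal; ring).
    change (INR (fact k)) with (factR k). rewrite <- Hs at 1. field. apply Rgt_not_eq; lra.
  - unfold Xv. rewrite Dmat_0k. rewrite Cmod_2a. fold x. simpl. rewrite factR_0, sqrt_1.
    rewrite <- RtoC_mult, Cmult_1_l, Cmult_1_r. f_equal.
    unfold E. rewrite <- !exp_plus, Rdiv_1. f_equal. field.
Qed.

Lemma Cconj_RtoC : forall r, Cconj (RtoC r) = RtoC r.
Proof. intros r; apply injective_projections; simpl; ring. Qed.

Lemma RtoC_2 : RtoC 2 = (RtoC 1 + RtoC 1)%C.
Proof. apply injective_projections; simpl; ring. Qed.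

Lemma series_step : forall a j i,
  is_series (V := C_NormedModule) (term a j i) (Xv a j i) ->
  is_series (V := C_NormedModule) (term a j (i-1)) (Xv a j (i-1)) ->
  is_series (V := C_NormedModule) (term a (S j) i) (Xv a (S j) i).
Proof.
  intros a j i H1 H2.
  set (s := RtoC (sqrt (INR (S j)))).
  assert (Hs : s <> RtoC 0).
  { unfold s. intro E. apply RtoC_inj in E. pose proof (INR_S_pos j).
    assert (0 < sqrt (INR (S j))) by (apply sqrt_lt_R0; lra). lra. }
  set (u := fun k => (RtoC (sqrt (INR k)) * Dmat a j (k-1) * (RtoC ((-1)^k) * Cconj (Dmat a i k)))%C).
  assert (Hu : is_series (V := C_NormedModule) u
                 (- RtoC (sqrt (INR i)) * Xv a j (i-1) + a * Xv a j i)%C).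
  { apply is_series_decr1C.
    - unfold u. simpl INR. rewrite sqrt_0. ring.
    - apply (is_series_Cscal (- RtoC (sqrt (INR i)))) in H2.
      apply (is_series_Cscal a) in H1.
      refine (is_series_Cext _ _ _ _ _ eq_refl (is_series_Cplus _ _ _ _ H2 H1)).
      intros k. unfold u, term.
      replace (S k - 1)%nat with k by lia.
      transitivity (Dmat a j k * RtoC (-1 * (-1)^k) * Cconj (RtoC (sqrt (INR (S k))) * Dmat a i (S k)))%C.
      2: { rewrite Cmult_conj, Cconj_RtoC. simpl pow. ring. }
      rewrite Dmat_rec2, Cminus_conj, !Cmult_conj, Cconj_conj, !Cconj_RtoC.
      rewrite RtoC_mult, RtoC_m1. ring. }
  assert (H3 : is_series (V := C_NormedModule) (fun k => (u k + a * term a j i k)%C)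
                 (- RtoC (sqrt (INR i)) * Xv a j (i-1) + a * Xv a j i + a * Xv a j i)%C).
  { apply is_series_Cplus; [exact Hu| apply is_series_Cscal; exact H1]. }
  apply (is_series_Cscal (/ s)) in H3.
  refine (is_series_Cext _ _ _ _ _ _ H3).
  - intros k. unfold u, term.
    transitivity (/ s * (s * Dmat a (S j) k) * (RtoC ((-1)^k) * Cconj (Dmat a i k)))%C.
    + unfold s. rewrite Dmat_rec1. ring.
    + field. exact Hs.
  - transitivity (/ s * (s * Xv a (S j) i))%C.
    + unfold s. rewrite Xrec. rewrite RtoC_2. ring.
    + field. exact Hs.
Qed.

Lemma series_all : forall a j i, is_series (V := C_NormedModule) (term a j i) (Xv a j i).
Proof.
  intros a.
  assert (HA : forall j, is_series (V := C_NormedModule) (term a j 0) (Xv a j 0)).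
  { induction j; [apply series_base|]. apply series_step; simpl; exact IHj. }
  assert (HB : forall i, is_series (V := C_NormedModule) (term a 0 i) (Xv a 0 i)).
  { intros i. pose proof (is_series_conj _ _ (HA i)) as H.
    refine (is_series_Cext _ _ _ _ _ _ H).
    - intros k. unfold term. rewrite !Cmult_conj, Cconj_conj, Cconj_RtoC. ring.
    - unfold Xv. rewrite Dmat_0k, Dmat_k0, !Cmult_conj, !Cconj_RtoC, Cpow_conj.
      simpl pow. rewrite Cmult_1_l.
      rewrite RtoC_pow, Cmult_assoc, (Cmult_comm (Coquelicot.Complex.Cpow (RtoC (-1)) i)).
      rewrite <- Cmult_assoc, Cpow_mult_l'. f_equal. f_equal.
      unfold bet. rewrite RtoC_m1. ring. }
  intros j; induction j; intros i.
  - apply HB.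
  - apply series_step; apply IHj.
Qed.

Definition SX (N : nat) (A : Op) (a : Complex.C) : Complex.C :=
  Csum (fun i => Csum (fun j => (A i j * Xv a j i)%C) N) N.

Lemma Wigner_SX : forall N A a, Wigner N A a = (RtoC (2 / PI) * SX N A a)%C.
Proof.
  intros N A a.
  assert (H : is_series (V := C_NormedModule) (wigner_term N A a) (SX N A a)).
  { unfold SX.
    refine (is_series_Cext _ _ _ _ _ eq_refl _).
    2: { apply is_series_Csum. intros i Hi. apply is_series_Csum. intros j Hj.
         apply is_series_Cscal. apply series_all. }
    intros k. unfold wigner_term, term. apply Csum_ext; intros i Hi. apply Csum_ext; intros j Hj.
    ring. }
  unfold Wigner. f_equal.
  rewrite (is_series_unique _ _ (is_series_C_fst _ _ H)).
  rewrite (is_series_unique _ _ (is_series_C_snd _ _ H)).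
  destruct (SX N A a); reflexivity.
Qed.

Lemma Csum_shift_ind : forall N l (g : nat -> Complex.C), (forall i, (N < i)%nat -> g i = RtoC 0) ->
  Csum (fun q => g (q+l)%nat) N = Csum (fun i => if Nat.leb l i then g i else RtoC 0) N.
Proof.
  intros N l g Hg.
  transitivity (Csum (fun q => Csum (fun i => if Nat.eqb i (q+l) then g i else RtoC 0) N) N).
  { apply Csum_ext; intros q Hq. rewrite Csum_delta.
    destruct (Nat.leb_spec (q+l) N); [reflexivity|]. apply Hg; lia. }
  rewrite Csum_swap. apply Csum_ext; intros i Hi.
  destruct (Nat.leb_spec l i).
  - transitivity (Csum (fun q => if Nat.eqb q (i-l) then g i else RtoC 0) N).
    + apply Csum_ext; intros q Hq.
      destruct (Nat.eqb_spec i (q+l)); destruct (Nat.eqb_spec q (i-l)); try reflexivity; lia.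
    + rewrite (Csum_delta (fun _ => g i)). replace (Nat.leb (i-l) N) with true by (symmetry; apply Nat.leb_le; lia).
      reflexivity.
  - apply Csum_zero; intros q Hq. destruct (Nat.eqb_spec i (q+l)); [lia|reflexivity].
Qed.

Lemma reindex_tri : forall N (F : nat -> nat -> nat -> Complex.C),
  (forall i j l, (N < i)%nat \/ (N < j)%nat -> F i j l = RtoC 0) ->
  Csum (fun i => Csum (fun j => Csum (fun l => F i j l) (Nat.min j i)) N) N =
  Csum (fun p => Csum (fun q => Csum (fun l => F (q+l)%nat (p+l)%nat l) N) N) N.
Proof.
  intros N F HF.
  transitivity (Csum (fun i => Csum (fun j => Csum (fun l =>
     if Nat.leb l i then if Nat.leb l j then F i j l else RtoC 0 else RtoC 0) N) N) N).
  { apply Csum_ext; intros i Hi. apply Csum_ext; intros j Hj.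
    rewrite <- (Csum_trunc _ (Nat.min j i) N) by lia. apply Csum_ext; intros l Hl.
    destruct (Nat.leb_spec l (Nat.min j i)); destruct (Nat.leb_spec l i); destruct (Nat.leb_spec l j);
      try reflexivity; lia. }
  transitivity (Csum (fun l => Csum (fun i => Csum (fun j =>
     if Nat.leb l i then if Nat.leb l j then F i j l else RtoC 0 else RtoC 0) N) N) N).
  { rewrite (Csum_ext (fun i => Csum (fun j => Csum _ N) N)
       (fun i => Csum (fun l => Csum (fun j =>
          if Nat.leb l i then if Nat.leb l j then F i j l else RtoC 0 else RtoC 0) N) N)).
    - apply Csum_swap.
    - intros i Hi. apply Csum_swap. }
  symmetry.
  transitivity (Csum (fun l => Csum (fun p => Csum (fun q => F (q+l)%nat (p+l)%nat l) N) N) N).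
  { rewrite (Csum_ext (fun p => Csum (fun q => Csum _ N) N)
       (fun p => Csum (fun l => Csum (fun q => F (q+l)%nat (p+l)%nat l) N) N)).
    - apply Csum_swap.
    - intros p Hp. apply Csum_swap. }
  apply Csum_ext; intros l Hl.
  rewrite Csum_swap.
  rewrite (Csum_shift_ind N l (fun i => Csum (fun p => F i (p+l)%nat l) N)).
  2: { intros i Hi. apply Csum_zero; intros; apply HF; lia. }
  apply Csum_ext; intros i Hi.
  destruct (Nat.leb l i).
  - rewrite (Csum_shift_ind N l (fun j => F i j l)).
    + apply Csum_ext; intros j Hj. reflexivity.
    + intros j Hj. apply HF; lia.
  - symmetry; apply Csum_zero; intros; reflexivity.
Qed.

Definition kap (p q : nat) : R := 2 ^ (p + q) / (factR p * factR q).

Definition Pm (N : nat) (A : Op) (a : Complex.C) : Complex.C :=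
  Csum (fun p => Csum (fun q => (RtoC (kap p q) * Qm N A q p *
     (Coquelicot.Complex.Cpow a p * Coquelicot.Complex.Cpow (Cconj a) q))%C) N) N.

Lemma m1_sq : forall q, (-1)^q * (-1)^q = 1.
Proof. intros q. rewrite <- Rpow_mult_distr. replace (-1 * -1) with 1 by ring. apply pow1. Qed.

Lemma SX_Pm : forall N A a, bounded_support N A ->
  SX N A a = (RtoC (exp (-2 * Cmod a ^ 2)) * Pm N A a)%C.
Proof.
  intros N A a hs. unfold SX, Xv, Dmat.
  set (b := (RtoC 2 * a)%C).
  assert (HE : exp (- (Cmod b ^ 2) / 2) = exp (-2 * Cmod a ^ 2)).
  { unfold b. rewrite Cmod_2a. f_equal. field. }
  rewrite HE. set (E2 := exp (-2 * Cmod a ^ 2)).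
  transitivity (RtoC E2 * Csum (fun i => Csum (fun j => Csum (fun l =>
     (A i j * RtoC ((-1)^i) *
      (Defs.Cpow b (j - l) * Defs.Cpow (- Cconj b) (i - l) *
       RtoC (sqrt (factR j * factR i) / (factR l * factR (j - l) * factR (i - l))))))%C
     (Nat.min j i)) N) N)%C.
  { rewrite Csum_mult_l. apply Csum_ext; intros i Hi. rewrite Csum_mult_l.
    apply Csum_ext; intros j Hj. rewrite !Csum_mult_l. apply Csum_ext; intros l Hl. ring. }
  f_equal.
  rewrite reindex_tri.
  2: { intros i j l [H|H]; rewrite hs by lia; ring. }
  unfold Pm. apply Csum_ext; intros p Hp. apply Csum_ext; intros q Hq.
  unfold Qm. rewrite Csum_mult_l, Csum_mult_r. apply Csum_ext; intros l Hl.
  replace (p + l - l)%nat with p by lia. replace (q + l - l)%nat with q by lia.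
  rewrite (Cpow_eq b), (Cpow_eq (Copp (Cconj b))).
  unfold b. rewrite Cmult_conj, Cconj_RtoC.
  replace (- (RtoC 2 * Cconj a))%C with (RtoC (-2) * Cconj a)%C
    by (apply injective_projections; simpl; ring).
  rewrite <- !Cpow_mult_l', <- !RtoC_pow.
  transitivity (RtoC ((-1)^(q+l) * 2^p * (-2)^q * (sqrt (factR (p+l) * factR (q+l)) /
      (factR l * factR p * factR q))) *
     (A (q+l)%nat (p+l)%nat * (Coquelicot.Complex.Cpow a p * Coquelicot.Complex.Cpow (Cconj a) q)))%C.
  { rewrite !RtoC_mult. ring. }
  transitivity (RtoC (kap p q * ((-1)^l / factR l * sqrt (factR (q+l) * factR (p+l)))) *
     (A (q+l)%nat (p+l)%nat * (Coquelicot.Complex.Cpow a p * Coquelicot.Complex.Cpow (Cconj a) q)))%C.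
  2: { rewrite !RtoC_mult. ring. }
  f_equal. f_equal. unfold kap.
  replace (-2) with (-1 * 2) by ring. rewrite Rpow_mult_distr, pow_add, pow_add.
  rewrite (Rmult_comm (factR (q+l)) (factR (p+l))).
  pose proof (factR_pos l); pose proof (factR_pos p); pose proof (factR_pos q).
  replace ((-1)^q * (-1)^l * 2^p * ((-1)^q * 2^q)) with (((-1)^q * (-1)^q) * (-1)^l * 2^p * 2^q) by ring.
  rewrite m1_sq. field. repeat split; apply Rgt_not_eq; lra.
Qed.

Notation CP := Coquelicot.Complex.Cpow.

Lemma Cconj_RtoC' : forall r, Cconj (RtoC r) = RtoC r.
Proof. intros r; apply injective_projections; simpl; ring. Qed.


Lemma Cmult_eq0_l' : forall c z : Complex.C, c <> RtoC 0 -> (c * z)%C = RtoC 0 -> z = RtoC 0.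
Proof. intros c z Hc H. replace z with (/ c * (c * z))%C by (field; exact Hc). rewrite H. ring. Qed.

Definition Tp (d : nat) (r : nat -> Complex.C) (z : Complex.C) : Complex.C :=
  Csum (fun e => (r e * CP z e)%C) d.

Lemma Tp_S : forall d r z, Tp (S d) r z = (r O + z * Tp d (fun e => r (S e)) z)%C.
Proof.
  intros d r z. unfold Tp. rewrite Csum_shift. simpl CP. rewrite Csum_mult_l.
  f_equal; [ring|]. apply Csum_ext; intros; ring.
Qed.

Lemma Tp_div : forall d r z0, exists q, q d = r (S d) /\
  forall z, Tp (S d) r z = (Tp (S d) r z0 + (z - z0) * Tp d q z)%C.
Proof.
  induction d; intros r z0.
  - exists (fun _ => r 1%nat). split; [reflexivity|]. intros z.
    unfold Tp. simpl. ring.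
  - destruct (IHd (fun e => r (S e)) z0) as [q' [Hq' Hz]].
    exists (fun e => match e with O => Tp (S d) (fun e => r (S e)) z0 | S e' => q' e' end).
    split; [exact Hq'|]. intros z.
    rewrite !(Tp_S (S d) r). rewrite Hz. rewrite (Tp_S d _ z). cbv beta iota. change (fun e : nat => q' e) with q'. ring.
Qed.

Lemma root_lemma : forall d (r : nat -> Complex.C) (pts : nat -> Complex.C),
  (forall k k', pts k = pts k' -> k = k') ->
  (forall k, Tp d r (pts k) = RtoC 0) -> forall e, (e <= d)%nat -> r e = RtoC 0.
Proof.
  induction d; intros r pts Hinj H e He.
  - replace e with O by lia. specialize (H O). unfold Tp in H. simpl in H.
    rewrite <- H. ring.
  - destruct (Tp_div d r (pts O)) as [q [Hqd Hz]].
    assert (Hq : forall e, (e <= d)%nat -> q e = RtoC 0).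
    { apply (IHd q (fun k => pts (S k))).
      - intros k k' E. apply Hinj in E. lia.
      - intros k. specialize (Hz (pts (S k))). rewrite !H in Hz.
        assert (Hne : (pts (S k) - pts O)%C <> RtoC 0).
        { intro E. apply (f_equal (fun w => (w + pts O)%C)) in E.
          replace (pts (S k) - pts O + pts O)%C with (pts (S k)) in E by ring.
          replace (RtoC 0 + pts O)%C with (pts O) in E by ring.
          apply Hinj in E. lia. }
        apply (f_equal (fun w => (w * / (pts (S k) - pts O))%C)) in Hz.
        replace (RtoC 0 * / (pts (S k) - pts O))%C with (RtoC 0) in Hz by ring.
        rewrite Hz. field. exact Hne. }
    assert (HrS : r (S d) = RtoC 0) by (rewrite <- Hqd; apply Hq; lia).
    destruct (Nat.eq_dec e (S d)) as [E|E]; [subst; exact HrS|].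
    apply (IHd r pts Hinj); [|lia].
    intros k. specialize (H k). unfold Tp in H. simpl in H. rewrite HrS in H.
    unfold Tp. rewrite <- H. ring.
Qed.

Definition Gp (M : nat) (c : nat -> nat -> Complex.C) (a : Complex.C) : Complex.C :=
  Csum (fun p => Csum (fun q => (c p q * (CP a p * CP (Cconj a) q))%C) M) M.

Definition Hd (M : nat) (c : nat -> nat -> Complex.C) (d : nat) (a : Complex.C) : Complex.C :=
  Csum (fun p => Csum (fun q => if Nat.eqb d (p+q) then (c p q * (CP a p * CP (Cconj a) q))%C
                                 else RtoC 0) M) M.

Lemma step_degree : forall M c, (forall a, Gp M c a = RtoC 0) ->
  forall a d, (d <= M + M)%nat -> Hd M c d a = RtoC 0.
Proof.
  intros M c HG a.
  apply (root_lemma (M+M) (fun d => Hd M c d a) (fun k => RtoC (INR k))).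
  - intros k k' E. apply RtoC_inj in E. apply INR_eq. exact E.
  - intros k. set (s := RtoC (INR k)).
    rewrite <- (HG (s * a)%C). unfold Tp, Hd, Gp.
    rewrite (Csum_ext _ (fun d => Csum (fun p => Csum (fun q =>
        if Nat.eqb d (p+q) then (c p q * (CP a p * CP (Cconj a) q) * CP s d)%C else RtoC 0) M) M) (M+M)).
    2: { intros d Hd0. rewrite Csum_mult_r. apply Csum_ext; intros p Hp. rewrite Csum_mult_r.
         apply Csum_ext; intros q Hq. destruct (Nat.eqb d (p+q)); ring. }
    rewrite Csum_swap. apply Csum_ext; intros p Hp.
    rewrite Csum_swap. apply Csum_ext; intros q Hq.
    rewrite (Csum_delta (fun d => (c p q * (CP a p * CP (Cconj a) q) * CP s d)%C)).
    replace (Nat.leb (p+q) (M+M)) with true by (symmetry; apply Nat.leb_le; lia).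
    rewrite Cmult_conj. unfold s. rewrite Cconj_RtoC' , !Cpow_mult_l, Cpow_add_r. ring.
Qed.

Definition ak (k : nat) : Complex.C := (1, INR k).

Lemma ak_conj_nz : forall k, Cconj (ak k) <> RtoC 0.
Proof. intros k E. apply (f_equal fst) in E. simpl in E. lra. Qed.

Definition zk (k : nat) : Complex.C := (ak k / Cconj (ak k))%C.

Lemma zk_inj : forall k k', zk k = zk k' -> k = k'.
Proof.
  intros k k' E. unfold zk in E.
  pose proof (ak_conj_nz k); pose proof (ak_conj_nz k').
  assert (E2 : (ak k * Cconj (ak k'))%C = (ak k' * Cconj (ak k))%C).
  { apply (f_equal (fun w => (w * Cconj (ak k) * Cconj (ak k'))%C)) in E.
    replace (ak k / Cconj (ak k) * Cconj (ak k) * Cconj (ak k'))%C with (ak k * Cconj (ak k'))%C in E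
      by (field; auto).
    rewrite E. field. auto. }
  apply (f_equal snd) in E2. unfold ak in E2. simpl in E2.
  apply INR_eq. lra.
Qed.

Lemma step_angle : forall M c d, (forall a, Hd M c d a = RtoC 0) ->
  forall p, (p <= M)%nat -> (p <= d)%nat -> (d - p <= M)%nat -> c p (d-p)%nat = RtoC 0.
Proof.
  intros M c d HH.
  set (c' := fun p => if andb (Nat.leb p d) (Nat.leb (d-p) M) then c p (d-p)%nat else RtoC 0).
  assert (Hform : forall a, Hd M c d a = Csum (fun p => (c' p * (CP a p * CP (Cconj a) (d-p)))%C) M).
  { intros a. unfold Hd. apply Csum_ext; intros p Hp. unfold c'.
    destruct (Nat.leb_spec p d).
    - rewrite (Csum_ext _ (fun q => if Nat.eqb q (d-p) then (c p q * (CP a p * CP (Cconj a) q))%C else RtoC 0)).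
      + rewrite (Csum_delta (fun q => (c p q * (CP a p * CP (Cconj a) q))%C)). cbn [andb].
        destruct (Nat.leb (d-p) M); [reflexivity| ring].
      + intros q Hq. destruct (Nat.eqb_spec d (p+q)); destruct (Nat.eqb_spec q (d-p)); try reflexivity; lia.
    - cbn [andb]. rewrite Csum_zero; [ring|]. intros q Hq. destruct (Nat.eqb_spec d (p+q)); [lia|reflexivity]. }
  assert (Hc' : forall p, (p <= M)%nat -> c' p = RtoC 0).
  { apply (root_lemma M c' zk zk_inj). intros k.
    specialize (HH (ak k)). rewrite Hform in HH.
    pose proof (ak_conj_nz k) as Hnz.
    assert (Hpow : CP (Cconj (ak k)) d <> RtoC 0) by (apply Cpow_nz; exact Hnz).
    apply (Cmult_eq0_l' (CP (Cconj (ak k)) d)); [exact Hpow|].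
    rewrite <- HH. unfold Tp. rewrite Csum_mult_l. apply Csum_ext; intros p Hp.
    unfold c'. destruct (Nat.leb_spec p d); cbn [andb]; [|ring].
    destruct (Nat.leb (d-p) M); [|ring].
    replace d with (p + (d - p))%nat at 1 by lia.
    rewrite Cpow_add_r.
    transitivity (c p (d-p)%nat * (CP (zk k) p * CP (Cconj (ak k)) p) * CP (Cconj (ak k)) (d-p))%C; [ring|].
    rewrite Cpow_mult_l'. unfold zk. replace (ak k / Cconj (ak k) * Cconj (ak k))%C with (ak k) by (field; exact Hnz).
    ring. }
  intros p Hp Hpd HdM. specialize (Hc' p Hp). unfold c' in Hc'.
  replace (Nat.leb p d) with true in Hc' by (symmetry; apply Nat.leb_le; lia).
  replace (Nat.leb (d-p) M) with true in Hc' by (symmetry; apply Nat.leb_le; lia).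
  exact Hc'.
Qed.

Lemma indep : forall M c, (forall a, Gp M c a = RtoC 0) ->
  forall p q, (p <= M)%nat -> (q <= M)%nat -> c p q = RtoC 0.
Proof.
  intros M c HG p q Hp Hq.
  pose proof (step_angle M c (p+q) (fun a => step_degree M c HG a (p+q) ltac:(lia)) p Hp ltac:(lia)
     ltac:(lia)) as H.
  replace (p + q - p)%nat with q in H by lia. exact H.
Qed.

Lemma Qm_supp : forall N A i j, bounded_support N A -> (N < i)%nat \/ (N < j)%nat -> Qm N A i j = RtoC 0.
Proof.
  intros N A i j hs H. unfold Qm. apply Csum_zero. intros l Hl. rewrite hs by lia. ring.
Qed.

Lemma Gp_ext : forall M c1 c2 a, (forall p q, (p <= M)%nat -> (q <= M)%nat -> c1 p q = c2 p q) ->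
  Gp M c1 a = Gp M c2 a.
Proof.
  intros. unfold Gp. apply Csum_ext; intros p Hp. apply Csum_ext; intros q Hq. rewrite H by lia. reflexivity.
Qed.

Lemma Gp_sub : forall M c1 c2 a,
  Gp M (fun p q => (c1 p q - c2 p q)%C) a = (Gp M c1 a - Gp M c2 a)%C.
Proof.
  intros. unfold Gp. unfold Cminus. rewrite <- Csum_opp, <- Csum_plus. apply Csum_ext; intros p Hp.
  rewrite <- Csum_opp, <- Csum_plus. apply Csum_ext; intros q Hq. ring.
Qed.

Definition cP (N : nat) (A : Op) (p q : nat) : Complex.C :=
  (RtoC (2 / PI * kap p q) * Qm N A q p)%C.

Lemma Pm_Gp : forall N A a M, bounded_support N A -> (N <= M)%nat ->
  (RtoC (2 / PI) * Pm N A a)%C = Gp M (cP N A) a.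
Proof.
  intros N A a M hs HM. unfold Pm, Gp, cP.
  rewrite Csum_mult_l.
  rewrite (Csum_extend _ N M HM).
  2: { intros p Hp. apply Csum_zero. intros q Hq. rewrite Qm_supp by (auto; lia). ring. }
  apply Csum_ext; intros p Hp. rewrite Csum_mult_l.
  rewrite (Csum_extend _ N M HM).
  2: { intros q Hq. rewrite Qm_supp by (auto; lia). ring. }
  apply Csum_ext; intros q Hq. rewrite RtoC_mult. ring.
Qed.

Definition cH (m : nat) (pc : nat -> Complex.C) (p q : nat) : Complex.C :=
  if Nat.eqb (p + q) m then pc p else RtoC 0.

Lemma homog_Gp : forall m pc a M, (m <= M)%nat -> homog_poly m pc a = Gp M (cH m pc) a.
Proof.
  intros m pc a M HM. unfold homog_poly, Gp, cH.
  rewrite <- (Csum_trunc _ m M HM). apply Csum_ext; intros p Hp.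
  destruct (Nat.leb_spec p m).
  - rewrite (Csum_ext _ (fun q => if Nat.eqb q (m-p) then (pc p * (CP a p * CP (Cconj a) q))%C else RtoC 0)).
    + rewrite (Csum_delta (fun q => (pc p * (CP a p * CP (Cconj a) q))%C)).
      replace (Nat.leb (m-p) M) with true by (symmetry; apply Nat.leb_le; lia).
      rewrite (Cpow_eq a), (Cpow_eq (Cconj a)). reflexivity.
    + intros q Hq. destruct (Nat.eqb_spec (p+q) m); destruct (Nat.eqb_spec q (m-p)); try ring; lia.
  - symmetry. apply Csum_zero. intros q Hq. destruct (Nat.eqb_spec (p+q) m); [lia| ring].
Qed.

Lemma kap_pos : forall p q, 0 < kap p q.
Proof.
  intros. unfold kap. pose proof (factR_pos p); pose proof (factR_pos q).
  apply Rdiv_lt_0_compat; [apply pow_lt; lra| apply Rmult_lt_0_compat; lra].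
Qed.

Lemma W_Pm : forall N A a, bounded_support N A ->
  Wigner N A a = (RtoC (2 / PI) * Pm N A a * RtoC (exp (-2 * Cmod a ^ 2)))%C.
Proof.
  intros. rewrite Wigner_SX, SX_Pm by assumption. ring.
Qed.

Lemma form_to_supp : forall N A m pc, bounded_support N A -> wigner_form N A m pc -> Qsupp N A m.
Proof.
  intros N A m pc hs [_ HW].
  set (M := (N + m)%nat).
  assert (HG : forall a, Gp M (fun p q => (cP N A p q - cH m pc p q)%C) a = RtoC 0).
  { intros a. rewrite Gp_sub, <- Pm_Gp, <- homog_Gp by (auto; unfold M; lia).
    specialize (HW a). rewrite W_Pm in HW by assumption.
    assert (HE : RtoC (exp (-2 * Cmod a ^ 2)) <> RtoC 0).
    { intro E. apply RtoC_inj in E. pose proof (exp_pos (-2 * Cmod a ^ 2)). lra. }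
    apply (Cmult_eq0_l' _ _ HE).
    transitivity (RtoC (2/PI) * Pm N A a * RtoC (exp (-2 * Cmod a ^ 2)) -
                  homog_poly m pc a * RtoC (exp (-2 * Cmod a ^ 2)))%C; [ring|].
    rewrite HW. ring. }
  pose proof (indep M _ HG) as HI.
  intros i j Hij.
  destruct (Nat.le_gt_cases i N) as [Hi|Hi]; [|apply Qm_supp; auto].
  destruct (Nat.le_gt_cases j N) as [Hj|Hj]; [|apply Qm_supp; auto].
  specialize (HI j i ltac:(unfold M; lia) ltac:(unfold M; lia)).
  unfold cH, cP in HI.
  replace (Nat.eqb (j + i) m) with false in HI by (symmetry; apply Nat.eqb_neq; lia).
  apply (Cmult_eq0_l' (RtoC (2 / PI * kap j i))).
  - intro E. apply RtoC_inj in E. pose proof (kap_pos j i). pose proof PI_RGT_0.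
    assert (0 < 2 / PI * kap j i) by (apply Rmult_lt_0_compat; [apply Rdiv_lt_0_compat|]; lra). lra.
  - rewrite <- HI. ring.
Qed.

Lemma Qm_herm : forall N A i j, hermitian A -> Cconj (Qm N A i j) = Qm N A j i.
Proof.
  intros N A i j hh. unfold Qm. rewrite Csum_conj. apply Csum_ext; intros l Hl.
  rewrite Cmult_conj, Cconj_RtoC. unfold hermitian in hh. rewrite <- hh.
  rewrite (Rmult_comm (factR (i+l))). reflexivity.
Qed.

Lemma kap_sym : forall p q, kap p q = kap q p.
Proof. intros. unfold kap. rewrite Nat.add_comm, Rmult_comm. reflexivity. Qed.

Lemma Pm_real : forall N A a, hermitian A -> Cconj (Pm N A a) = Pm N A a.
Proof.
  intros N A a hh. unfold Pm. rewrite Csum_conj.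
  rewrite (Csum_ext _ (fun p => Csum (fun q => (RtoC (kap q p) * Qm N A p q *
     (CP a q * CP (Cconj a) p))%C) N)).
  - apply Csum_swap.
  - intros p Hp. rewrite Csum_conj. apply Csum_ext; intros q Hq.
    rewrite !Cmult_conj, Cconj_RtoC, !Cpow_conj, Cconj_conj, Qm_herm by assumption.
    rewrite kap_sym. ring.
Qed.

Definition pcoef (N : nat) (A : Op) (m : nat) (e : nat) : Complex.C :=
  (RtoC (2 / PI * kap e (m - e)) * Qm N A (m - e) e)%C.

Lemma supp_to_form : forall N A m, bounded_support N A -> hermitian A -> Qsupp N A m ->
  wigner_form N A m (pcoef N A m).
Proof.
  intros N A m hs hh hq.
  assert (HH : forall a, homog_poly m (pcoef N A m) a = (RtoC (2 / PI) * Pm N A a)%C).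
  { intros a. rewrite (homog_Gp m _ a (N + m)) by lia. rewrite (Pm_Gp N A a (N+m)) by (auto; lia).
    apply Gp_ext. intros p q Hp Hq. unfold cH, cP, pcoef.
    destruct (Nat.eqb_spec (p+q) m).
    - replace (m - p)%nat with q by lia. reflexivity.
    - rewrite hq by lia. ring. }
  split.
  - intros a. rewrite HH.
    pose proof (Pm_real N A a hh) as Hr.
    destruct (Pm N A a) as [x y]. unfold Cconj in Hr. simpl in Hr. simpl.
    apply (f_equal snd) in Hr. simpl in Hr. assert (y = 0) by lra. subst. ring.
  - intros a. rewrite W_Pm by assumption. rewrite HH. reflexivity.
Qed.

Theorem lemma10 (N : nat) (A : Op)
  (hsupp : bounded_support N A) (hherm : hermitian A)
  (hnz : exists i j, A i j <> RtoC 0) :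
  ((exists t, 1 < t /\ is_eigenvector N t A) <->
   (forall t, 1 <= t -> is_eigenvector N t A)) /\
  ((forall t, 1 <= t -> is_eigenvector N t A) <->
   (exists m p, wigner_form N A m p)) /\
  (forall m p, wigner_form N A m p ->
     forall t, 1 <= t -> forall i j,
       Vertigo N t A i j = Cmult (RtoC (sqrt t ^ m)) (A i j)).
Proof.
  assert (S2E : forall m, Qsupp N A m -> forall t, 1 <= t -> is_eigenvector N t A).
  { intros m hq t Ht. exists (RtoC (sqrt t ^ m)). apply supp_to_eig; auto; lra. }
  split; [|split].
  - split.
    + intros [t [Ht He]]. destruct (eig_to_supp N A t hsupp hnz Ht He) as [m hq].
      apply (S2E m hq).
    + intros H. exists 2. split; [lra|]. apply H; lra.
  - split.
    + intros H. destruct (eig_to_supp N A 2 hsupp hnz ltac:(lra) (H 2 ltac:(lra))) as [m hq].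
      exists m, (pcoef N A m). apply supp_to_form; auto.
    + intros [m [p Hf]]. apply (S2E m). apply (form_to_supp N A m p hsupp Hf).
  - intros m p Hf t Ht i j. apply supp_to_eig; auto.
    + apply (form_to_supp N A m p hsupp Hf).
    + lra.
Qed.
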